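(* For every $n\ge2$, every $\omega\in[0,1)$, every $l\in[1,n)$, every $r\in(l,n]$ (integers) and every $t\in\mathbb R$, $$\|[\tau_t^n(c_l),a_r^*]\|\ge\big|(e^{-2iH_n(\omega)t})_{l,r}\big|.$$
   Context: Setting: $V_j=\lambda\chi_{[1-\phi^{-1},1)}(j\phi^{-1}+\omega\bmod1)$, $\lambda>0$, $\phi=\frac{1+\sqrt5}2$; $\mathcal H_n=\bigotimes_{j=1}^n\mathbb C^2$; $H_n^{XY}=-\sum_{j=1}^{n-1}(\sigma^x_j\sigma^x_{j+1}+\sigma^y_j\sigma^y_{j+1})+\sum_{j=1}^nV_j\sigma^z_j$; $\tau_t^n(A)=e^{itH_n^{XY}}Ae^{-itH_n^{XY}}$. $a_j=\frac12(\sigma^x_j-i\sigma^y_j)$, $a_j^*$ its adjoint; $c_1=a_1$, $c_j=\sigma^z_1\cdots\sigma^z_{j-1}a_j$. $H_n(\omega)$ is the $n\times n$ real symmetric tridiagonal matrix with diagonal entries $V_1,\dots,V_n$ and all off-diagonal entries (on the first super- and sub-diagonals) equal to $1$; $(M)_{l,r}$ denotes the $(l,r)$ matrix entry. *)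

(* Defs.v *)
From Stdlib Require Import Reals Lra Lia Arith ClassicalEpsilon.
Open Scope R_scope.

Record C := mkC { Cre : R; Cim : R }.
Definition C0 : C := mkC 0 0.
Definition C1 : C := mkC 1 0.
Definition Ci : C := mkC 0 1.
Definition RtoC (x : R) : C := mkC x 0.
Definition Cadd (z w : C) : C := mkC (Cre z + Cre w) (Cim z + Cim w).
Definition Copp (z : C) : C := mkC (- Cre z) (- Cim z).
Definition Cmul (z w : C) : C :=
  mkC (Cre z * Cre w - Cim z * Cim w) (Cre z * Cim w + Cim z * Cre w).
Definition Cconj (z : C) : C := mkC (Cre z) (- Cim z).
Definition Cmod (z : C) : R := sqrt (Cre z ^ 2 + Cim z ^ 2).

Fixpoint csum (N : nat) (f : nat -> C) : C :=
  match N with O => C0 | S m => Cadd (csum m f) (f m) end.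

(* ---------- matrices (0-based indices; dimension passed explicitly) ---------- *)
Definition Mat := nat -> nat -> C.
Definition Vec := nat -> C.
Definition mzero : Mat := fun _ _ => C0.
Definition mid : Mat := fun i j => if Nat.eqb i j then C1 else C0.
Definition madd (A B : Mat) : Mat := fun i j => Cadd (A i j) (B i j).
Definition mscale (c : C) (A : Mat) : Mat := fun i j => Cmul c (A i j).
Definition msub (A B : Mat) : Mat := madd A (mscale (RtoC (-1)) B).
Definition madj (A : Mat) : Mat := fun i j => Cconj (A j i).
Definition mmul (N : nat) (A B : Mat) : Mat :=
  fun i j => csum N (fun k => Cmul (A i k) (B k j)).
Definition mapply (N : nat) (A : Mat) (v : Vec) : Vec :=
  fun i => csum N (fun k => Cmul (A i k) (v k)).
Definition comm (N : nat) (X Y : Mat) : Mat := msub (mmul N X Y) (mmul N Y X).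

Fixpoint mpow (N : nat) (A : Mat) (k : nat) : Mat :=
  match k with O => mid | S k' => mmul N (mpow N A k') A end.

Fixpoint mexp_partial (N : nat) (A : Mat) (m : nat) : Mat :=
  match m with
  | O => mid
  | S m' => madd (mexp_partial N A m') (mscale (RtoC (/ INR (fact m))) (mpow N A m))
  end.

Definition is_mexp (N : nat) (A E : Mat) : Prop :=
  forall i j, (i < N)%nat -> (j < N)%nat ->
    Un_cv (fun m => Cre (mexp_partial N A m i j)) (Cre (E i j)) /\
    Un_cv (fun m => Cim (mexp_partial N A m i j)) (Cim (E i j)).

Definition mexp (N : nat) (A : Mat) : Mat :=
  epsilon (inhabits mzero) (is_mexp N A).

Definition vnorm (N : nat) (v : Vec) : R :=
  sqrt (Cre (csum N (fun k => RtoC (Cmod (v k) ^ 2)))).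
Definition opnorm (N : nat) (A : Mat) : R :=
  epsilon (inhabits 0)
    (is_lub (fun r => exists v : Vec, vnorm N v <= 1 /\ r = vnorm N (mapply N A v))).

Definition phi : R := (1 + sqrt 5) / 2.
Definition chi_int (a b y : R) : R :=
  if Rle_dec a y then (if Rlt_dec y b then 1 else 0) else 0.
Definition V (lam om : R) (j : nat) : R :=
  lam * chi_int (1 - / phi) 1 (frac_part (INR j * / phi + om)).

(* ---------- spin chain on (C^2)^{tensor n}, dimension 2^n ----------
   Basis vector x in [0, 2^n): site j (1-based) carries the bit (j-1) of x;
   bit value 0 / 1 = first / second basis vector of C^2. *)
Definition dimH (n : nat) : nat := 2 ^ n.
Definition bitv (x k : nat) : nat := if Nat.testbit x k then 1%nat else 0%nat.

(* the operator s (a 2x2 matrix) acting on site j, identity elsewhere *)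
Definition site_op (j : nat) (s : Mat) : Mat :=
  fun x y =>
    if Nat.eqb (Nat.clearbit x (j - 1)) (Nat.clearbit y (j - 1))
    then s (bitv x (j - 1)) (bitv y (j - 1)) else C0.

Definition pauli_x : Mat := fun a b =>
  match a, b with 0,1 | 1,0 => C1 | _,_ => C0 end%nat.
Definition pauli_y : Mat := fun a b =>
  match a, b with 0,1 => Copp Ci | 1,0 => Ci | _,_ => C0 end%nat.
Definition pauli_z : Mat := fun a b =>
  match a, b with 0,0 => C1 | 1,1 => RtoC (-1) | _,_ => C0 end%nat.

Definition sx (j : nat) : Mat := site_op j pauli_x.
Definition sy (j : nat) : Mat := site_op j pauli_y.
Definition sz (j : nat) : Mat := site_op j pauli_z.

Definition a_op (j : nat) : Mat :=
  mscale (RtoC (/ 2)) (msub (sx j) (mscale Ci (sy j))).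
Definition a_star (j : nat) : Mat := madj (a_op j).

Fixpoint zstring (n k : nat) : Mat :=
  match k with O => mid | S k' => mmul (dimH n) (zstring n k') (sz (S k')) end.
Definition c_op (n l : nat) : Mat := mmul (dimH n) (zstring n (l - 1)) (a_op l).

Fixpoint msumf (k : nat) (F : nat -> Mat) : Mat :=
  match k with O => mzero | S k' => madd (msumf k' F) (F k') end.

Definition H_XY (lam om : R) (n : nat) : Mat :=
  let N := dimH n in
  madd
    (mscale (RtoC (-1))
       (msumf (n - 1) (fun i => let j := S i in
          madd (mmul N (sx j) (sx (S j))) (mmul N (sy j) (sy (S j))))))
    (msumf n (fun i => let j := S i in mscale (RtoC (V lam om j)) (sz j))).

Definition tau (lam om : R) (n : nat) (t : R) (A : Mat) : Mat :=
  let N := dimH n in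
  mmul N (mmul N (mexp N (mscale (mkC 0 t) (H_XY lam om n))) A)
         (mexp N (mscale (mkC 0 (- t)) (H_XY lam om n))).

(* H_n(omega): n x n tridiagonal, 0-based storage: entry (l,r) (1-based)
   is stored at (l-1, r-1). *)
Definition Hn (lam om : R) (n : nat) : Mat :=
  fun i k => if Nat.eqb i k then RtoC (V lam om (S i))
             else if (Nat.eqb i (S k) || Nat.eqb k (S i))%bool then C1 else C0.

(* Main.v *)
Require Import Defs.
From Stdlib Require Import Reals Lra Lia Arith ClassicalEpsilon FunctionalExtensionality Ring Bool.
Import Defs.
Open Scope R_scope.

Lemma Cext : forall z w : C, Cre z = Cre w -> Cim z = Cim w -> z = w.
Proof. intros [a b] [c d]; simpl; intros; subst; reflexivity. Qed.

Definition Csub z w := Cadd z (Copp w).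

Lemma C_ring : ring_theory C0 C1 Cadd Cmul Csub Copp (@eq C).
Proof.
  constructor; intros; apply Cext; destruct x; try destruct y; try destruct z;
  simpl; ring.
Qed.
Add Ring Cring : C_ring.

Ltac Csolve := apply Cext; simpl; ring.

Lemma test (a b c : C) : Cmul a (Cadd b c) = Cadd (Cmul c a) (Cmul a b).
Proof. ring. Qed.

Lemma Cre_add z w : Cre (Cadd z w) = Cre z + Cre w. Proof. reflexivity. Qed.
Lemma Cim_add z w : Cim (Cadd z w) = Cim z + Cim w. Proof. reflexivity. Qed.

Lemma Cmod_ge0 z : 0 <= Cmod z.
Proof. unfold Cmod; apply sqrt_pos. Qed.

Lemma Cmod_mul z w : Cmod (Cmul z w) = Cmod z * Cmod w.
Proof.
  destruct z as [a b], w as [c d]; unfold Cmod; simpl.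
  rewrite <- sqrt_mult by nra. f_equal. ring.
Qed.

Lemma Cmod_add z w : Cmod (Cadd z w) <= Cmod z + Cmod w.
Proof.
  destruct z as [a b], w as [c d]; unfold Cmod; cbn [Cre Cim Cadd].
  set (x := sqrt (a^2+b^2)); set (y := sqrt (c^2+d^2)).
  assert (hx : 0 <= x) by apply sqrt_pos. assert (hy : 0 <= y) by apply sqrt_pos.
  assert (hx2 : x*x = a^2+b^2) by (apply sqrt_sqrt; nra).
  assert (hy2 : y*y = c^2+d^2) by (apply sqrt_sqrt; nra).
  assert (hxy : a*c+b*d <= x*y).
  { assert (0 <= x*y) by (apply Rmult_le_pos; auto).
    destruct (Rle_dec (a*c+b*d) 0). lra.
    apply Rsqr_incr_0_var. unfold Rsqr.
    replace (x*y*(x*y)) with ((x*x)*(y*y)) by ring. rewrite hx2, hy2.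
    assert (0 <= (a*d-b*c)^2) by (apply pow2_ge_0). nra. lra. }
  fold x y. rewrite <- (sqrt_Rsqr (x+y)) by lra. apply sqrt_le_1_alt. unfold Rsqr. nra.
Qed.

Lemma Cmod_Cre z : Rabs (Cre z) <= Cmod z.
Proof.
  destruct z as [a b]; unfold Cmod; cbn [Cre Cim]. rewrite <- sqrt_Rsqr_abs.
  apply sqrt_le_1_alt. unfold Rsqr. nra.
Qed.
Lemma Cmod_Cim z : Rabs (Cim z) <= Cmod z.
Proof.
  destruct z as [a b]; unfold Cmod; cbn [Cre Cim]. rewrite <- sqrt_Rsqr_abs.
  apply sqrt_le_1_alt. unfold Rsqr. nra.
Qed.

Lemma Cmod_RtoC x : Cmod (RtoC x) = Rabs x.
Proof. unfold Cmod; simpl. rewrite <- sqrt_Rsqr_abs. f_equal. unfold Rsqr; ring. Qed.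
Lemma Cmod_C1 : Cmod C1 = 1.
Proof. unfold Cmod; cbn [Cre Cim C1]. replace (1^2+0^2) with 1 by ring. apply sqrt_1. Qed.
Lemma Cmod_C0 : Cmod C0 = 0.
Proof. unfold Cmod; cbn [Cre Cim C0]. replace (0^2+0^2) with 0 by ring. apply sqrt_0. Qed.
Lemma Cmod_opp z : Cmod (Copp z) = Cmod z.
Proof. destruct z; unfold Cmod; simpl. f_equal; ring. Qed.

Lemma csum_ext N f g : (forall k, (k < N)%nat -> f k = g k) -> csum N f = csum N g.
Proof. induction N; simpl; intros H; auto. rewrite IHN by (intros; apply H; lia). rewrite H by lia. auto. Qed.

Lemma csum_add N f g : csum N (fun k => Cadd (f k) (g k)) = Cadd (csum N f) (csum N g).
Proof. induction N; simpl. Csolve. rewrite IHN. ring. Qed.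

Lemma csum_mul_l N c f : csum N (fun k => Cmul c (f k)) = Cmul c (csum N f).
Proof. induction N; simpl. Csolve. rewrite IHN. ring. Qed.

Lemma csum_mul_r N c f : csum N (fun k => Cmul (f k) c) = Cmul (csum N f) c.
Proof. induction N; simpl. Csolve. rewrite IHN. ring. Qed.

Lemma csum_0 N : csum N (fun _ => C0) = C0.
Proof. induction N; simpl; auto. rewrite IHN. ring. Qed.

Lemma csum_swap N M (f : nat -> nat -> C) :
  csum N (fun i => csum M (fun j => f i j)) = csum M (fun j => csum N (fun i => f i j)).
Proof.
  induction N; simpl. rewrite csum_0; auto.
  rewrite IHN. rewrite <- csum_add. reflexivity.
Qed.

Lemma csum_delta N a f :
  csum N (fun k => if Nat.eqb k a then f k else C0) = if Nat.ltb a N then f a else C0.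
Proof.
  induction N; simpl. reflexivity.
  rewrite IHN. destruct (Nat.eqb N a) eqn:E.
  - apply Nat.eqb_eq in E; subst. replace (Nat.ltb a a) with false by (symmetry; apply Nat.ltb_ge; lia).
    replace (Nat.ltb a (S a)) with true by (symmetry; apply Nat.ltb_lt; lia). ring.
  - apply Nat.eqb_neq in E. destruct (Nat.ltb a N) eqn:E2.
    + apply Nat.ltb_lt in E2. replace (Nat.ltb a (S N)) with true by (symmetry; apply Nat.ltb_lt; lia). ring.
    + apply Nat.ltb_ge in E2. replace (Nat.ltb a (S N)) with false by (symmetry; apply Nat.ltb_ge; lia). ring.
Qed.

Lemma csum_delta_lt N a f : (a < N)%nat ->
  csum N (fun k => if Nat.eqb k a then f k else C0) = f a.
Proof. intros H. rewrite csum_delta. replace (Nat.ltb a N) with true by (symmetry; apply Nat.ltb_lt; lia). auto. Qed.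

Lemma csum_shift N f : csum (S N) f = Cadd (f 0%nat) (csum N (fun k => f (S k))).
Proof. induction N; simpl. ring. simpl in IHN. rewrite IHN. ring. Qed.

Lemma Cre_csum N f : Cre (csum N f) = Cre (csum N (fun k => RtoC (Cre (f k)))).
Proof. induction N; simpl; auto. rewrite IHN. auto. Qed.
Lemma Cim_csum_RtoC N f : Cim (csum N (fun k => RtoC (f k))) = 0.
Proof. induction N; simpl; auto. rewrite IHN. ring. Qed.

Lemma Cre_csum_sum p f : Cre (csum (S p) (fun k => RtoC (f k))) = sum_f_R0 f p.
Proof. induction p. simpl. ring. change (Cre (csum (S p) (fun k => RtoC (f k))) + f (S p) = sum_f_R0 f p + f (S p)). rewrite IHp; auto. Qed.

Lemma csum_re_le N f g : (forall k, (k < N)%nat -> f k <= g k) ->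
  Cre (csum N (fun k => RtoC (f k))) <= Cre (csum N (fun k => RtoC (g k))).
Proof. induction N; simpl; intros H. lra. specialize (IHN (fun k h => H k ltac:(lia))). specialize (H N ltac:(lia)). lra. Qed.

Lemma csum_re_ge0 N f : (forall k, (k < N)%nat -> 0 <= f k) -> 0 <= Cre (csum N (fun k => RtoC (f k))).
Proof. induction N; simpl; intros H. lra. specialize (IHN (fun k h => H k ltac:(lia))). specialize (H N ltac:(lia)). lra. Qed.

Lemma Cmod_csum N f : Cmod (csum N f) <= Cre (csum N (fun k => RtoC (Cmod (f k)))).
Proof. induction N; simpl. rewrite Cmod_C0; lra. eapply Rle_trans. apply Cmod_add. lra. Qed.

Lemma Cmod_csum_le N f g : (forall k, (k < N)%nat -> Cmod (f k) <= g k) ->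
  Cmod (csum N f) <= Cre (csum N (fun k => RtoC (g k))).
Proof. intros H. eapply Rle_trans. apply Cmod_csum. apply csum_re_le. auto. Qed.

Lemma csum_re_single_le N f a : (a < N)%nat -> (forall k, (k<N)%nat -> 0 <= f k) ->
  f a <= Cre (csum N (fun k => RtoC (f k))).
Proof. induction N; intros Ha H. lia. simpl. assert (0 <= f N) by (apply H; lia).
  destruct (Nat.eq_dec a N). subst. pose proof (csum_re_ge0 N f (fun k h => H k ltac:(lia))). lra.
  specialize (IHN ltac:(lia) (fun k h => H k ltac:(lia))). lra. Qed.

Definition rsum N (f : nat -> R) : R := Cre (csum N (fun k => RtoC (f k))).

Lemma rsum_le N f g : (forall k, (k < N)%nat -> f k <= g k) -> rsum N f <= rsum N g.
Proof. apply csum_re_le. Qed.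
Lemma rsum_ge0 N f : (forall k, (k < N)%nat -> 0 <= f k) -> 0 <= rsum N f.
Proof. apply csum_re_ge0. Qed.
Lemma rsum_single N f a : (a < N)%nat -> (forall k, (k<N)%nat -> 0 <= f k) -> f a <= rsum N f.
Proof. apply csum_re_single_le. Qed.
Lemma rsum_mul_l N c f : rsum N (fun k => c * f k) = c * rsum N f.
Proof. unfold rsum. induction N; simpl. ring. rewrite IHN. ring. Qed.
Lemma rsum_S N f : rsum (S N) f = rsum N f + f N.
Proof. reflexivity. Qed.
Lemma rsum_sum p f : rsum (S p) f = sum_f_R0 f p.
Proof. apply Cre_csum_sum. Qed.
Lemma Cmod_csum_r N f : Cmod (csum N f) <= rsum N (fun k => Cmod (f k)).
Proof. apply Cmod_csum. Qed.
Lemma rsum_ext N f g : (forall k, (k < N)%nat -> f k = g k) -> rsum N f = rsum N g.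
Proof. intros H; unfold rsum; f_equal; apply csum_ext; intros; rewrite H; auto. Qed.
Lemma rsum_0 N : rsum N (fun _ => 0) = 0.
Proof. unfold rsum; induction N; simpl; auto. rewrite IHN; ring. Qed.
Lemma rsum_add N f g : rsum N (fun k => f k + g k) = rsum N f + rsum N g.
Proof. unfold rsum; induction N; simpl. ring. rewrite IHN; ring. Qed.

Definition Ccv (u : nat -> C) (z : C) : Prop :=
  Un_cv (fun m => Cre (u m)) (Cre z) /\ Un_cv (fun m => Cim (u m)) (Cim z).

Lemma Un_cv_const c : Un_cv (fun _ => c) c.
Proof. intros e He. exists 0%nat. intros. unfold Rdist. rewrite Rminus_diag, Rabs_R0. auto. Qed.

Lemma Ccv_const c : Ccv (fun _ => c) c.
Proof. split; apply Un_cv_const. Qed.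

Lemma Ccv_add u v a b : Ccv u a -> Ccv v b -> Ccv (fun m => Cadd (u m) (v m)) (Cadd a b).
Proof. intros [h1 h2] [h3 h4]; split; simpl; apply CV_plus; auto. Qed.

Lemma Ccv_mul u v a b : Ccv u a -> Ccv v b -> Ccv (fun m => Cmul (u m) (v m)) (Cmul a b).
Proof. intros [h1 h2] [h3 h4]; split; simpl.
  apply CV_minus; apply CV_mult; auto.
  apply CV_plus; apply CV_mult; auto. Qed.

Lemma Ccv_ext u v a : (forall m, u m = v m) -> Ccv u a -> Ccv v a.
Proof. intros H [h1 h2]; split.
  eapply Un_cv_ext; [|exact h1]; intros; simpl; rewrite H; auto.
  eapply Un_cv_ext; [|exact h2]; intros; simpl; rewrite H; auto. Qed.

Lemma Ccv_unique u a b : Ccv u a -> Ccv u b -> a = b.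
Proof. intros [h1 h2] [h3 h4]. apply Cext; eapply UL_sequence; eauto. Qed.

Lemma Ccv_csum K (f : nat -> nat -> C) (l : nat -> C) :
  (forall k, (k < K)%nat -> Ccv (fun m => f m k) (l k)) ->
  Ccv (fun m => csum K (f m)) (csum K l).
Proof. induction K; intros H; simpl. apply Ccv_const.
  apply Ccv_add. apply IHK; intros; apply H; lia. apply H; lia. Qed.

Lemma Ccv_close u v a d : Ccv v a -> Un_cv d 0 ->
  (forall m, Cmod (Cadd (u m) (Copp (v m))) <= d m) -> Ccv u a.
Proof.
  intros [h1 h2] hd H. split.
  - intros e He. destruct (h1 (e/2) ltac:(lra)) as [N1 HN1].
    destruct (hd (e/2) ltac:(lra)) as [N2 HN2]. exists (max N1 N2). intros m Hm.
    specialize (HN1 m ltac:(lia)). specialize (HN2 m ltac:(lia)). specialize (H m).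
    pose proof (Cmod_Cre (Cadd (u m) (Copp (v m)))). unfold Rdist in *. simpl in *.
    rewrite Rminus_0_r in HN2.
    apply Rabs_def2 in HN1. apply Rabs_def2 in HN2. apply Rabs_def1; apply Rabs_def2b in H0 ||
    (pose proof (Rle_abs (Cre (u m) + - Cre (v m))); pose proof (Rle_abs (-(Cre (u m) + - Cre (v m)))); rewrite Rabs_Ropp in *; lra).
  - intros e He. destruct (h2 (e/2) ltac:(lra)) as [N1 HN1].
    destruct (hd (e/2) ltac:(lra)) as [N2 HN2]. exists (max N1 N2). intros m Hm.
    specialize (HN1 m ltac:(lia)). specialize (HN2 m ltac:(lia)). specialize (H m).
    pose proof (Cmod_Cim (Cadd (u m) (Copp (v m)))). unfold Rdist in *. simpl in *.
    rewrite Rminus_0_r in HN2.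
    apply Rabs_def2 in HN1. apply Rabs_def2 in HN2.
    pose proof (Rle_abs (Cim (u m) + - Cim (v m))); pose proof (Rle_abs (-(Cim (u m) + - Cim (v m)))); rewrite Rabs_Ropp in *.
    apply Rabs_def1; lra.
Qed.

Definition matnorm N (A : Mat) : R :=
  rsum N (fun i => rsum N (fun j => Cmod (A i j))).

Lemma matnorm_ge0 N A : 0 <= matnorm N A.
Proof. apply rsum_ge0; intros; apply rsum_ge0; intros; apply Cmod_ge0. Qed.

Lemma colsum_le N A j : (j < N)%nat -> rsum N (fun l => Cmod (A l j)) <= matnorm N A.
Proof. intros Hj. apply rsum_le. intros l Hl. apply (rsum_single N (fun j => Cmod (A l j))); auto.
  intros; apply Cmod_ge0. Qed.

Lemma mid_bound i j : Cmod (mid i j) <= 1.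
Proof. unfold mid. destruct (Nat.eqb i j). rewrite Cmod_C1; lra. rewrite Cmod_C0; lra. Qed.

Lemma mpow_bound N A k i j : (j < N)%nat -> Cmod (mpow N A k i j) <= (matnorm N A) ^ k.
Proof.
  revert j. induction k; intros j Hj; simpl. apply mid_bound.
  unfold mmul. eapply Rle_trans. apply Cmod_csum_r.
  eapply Rle_trans. apply (rsum_le _ _ (fun l => matnorm N A ^ k * Cmod (A l j))).
  intros l Hl. rewrite Cmod_mul. apply Rmult_le_compat_r. apply Cmod_ge0. apply IHk; auto.
  rewrite rsum_mul_l. rewrite Rmult_comm. apply Rmult_le_compat_r.
  apply pow_le, matnorm_ge0. apply colsum_le; auto.
Qed.

Definition mterm N A k : Mat := mscale (RtoC (/ INR (fact k))) (mpow N A k).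

Lemma mexp_partial_csum N A m i j :
  mexp_partial N A m i j = csum (S m) (fun k => mterm N A k i j).
Proof.
  induction m.
  - unfold mterm, mscale; simpl. apply Cext; simpl; rewrite Rinv_1; ring.
  - change (csum (S (S m)) (fun k => mterm N A k i j)) with
      (Cadd (csum (S m) (fun k => mterm N A k i j)) (mterm N A (S m) i j)).
    rewrite <- IHm. reflexivity.
Qed.

Lemma exp_cv x : Un_cv (fun m => sum_f_R0 (fun i => / INR (fact i) * x ^ i) m) (exp x).
Proof. unfold exp. destruct (exist_exp x) as [l H]. exact H. Qed.

Lemma series_abs_conv (a b : nat -> R) : (forall k, Rabs (a k) <= b k) ->
  { l | Un_cv (fun m => sum_f_R0 b m) l } -> { l | Un_cv (fun m => sum_f_R0 a m) l }.
Proof.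
  intros H Hb. apply cv_cauchy_2. apply cauchy_abs. apply cv_cauchy_1.
  apply (Rseries_CV_comp _ b); auto. intros; split; auto. apply Rabs_pos.
Qed.

Lemma mterm_bound N A k i j : (j < N)%nat ->
  Cmod (mterm N A k i j) <= / INR (fact k) * matnorm N A ^ k.
Proof.
  intros Hj. unfold mterm, mscale. rewrite Cmod_mul, Cmod_RtoC.
  rewrite Rabs_right. apply Rmult_le_compat_l. left; apply Rinv_0_lt_compat, INR_fact_lt_0.
  apply mpow_bound; auto. left; apply Rinv_0_lt_compat, INR_fact_lt_0.
Qed.

Lemma mexp_exists N A : exists E, is_mexp N A E.
Proof.
  assert (H : forall i j, (j < N)%nat -> exists z, Ccv (fun m => mexp_partial N A m i j) z).
  { intros i j Hj.
    assert (hb : { l | Un_cv (fun m => sum_f_R0 (fun k => / INR (fact k) * matnorm N A ^ k) m) l })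
      by (exists (exp (matnorm N A)); apply exp_cv).
    destruct (series_abs_conv (fun k => Cre (mterm N A k i j)) _
      (fun k => Rle_trans _ _ _ (Cmod_Cre _) (mterm_bound N A k i j Hj)) hb) as [lr Hr].
    destruct (series_abs_conv (fun k => Cim (mterm N A k i j)) _
      (fun k => Rle_trans _ _ _ (Cmod_Cim _) (mterm_bound N A k i j Hj)) hb) as [li Hi].
    exists (mkC lr li). split; simpl.
    - eapply Un_cv_ext; [|exact Hr]. intros m. rewrite mexp_partial_csum, Cre_csum.
      rewrite Cre_csum_sum. reflexivity.
    - eapply Un_cv_ext; [|exact Hi]. intros m. rewrite mexp_partial_csum.
      rewrite <- (Cre_csum_sum m (fun k => Cim (mterm N A k i j))).
      clear. generalize (S m). induction n; cbn [csum Cre Cim Cadd RtoC C0]; auto. rewrite IHn. auto. }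
  exists (fun i j => match excluded_middle_informative ((j < N)%nat) with
     | left h => proj1_sig (constructive_indefinite_description _ (H i j h))
     | right _ => C0 end).
  intros i j Hi Hj. destruct (excluded_middle_informative (j < N)%nat); [|lia].
  destruct (constructive_indefinite_description _ _) as [z Hz]. exact Hz.
Qed.

Lemma mexp_spec N A : is_mexp N A (mexp N A).
Proof. unfold mexp. apply epsilon_spec. apply mexp_exists. Qed.

Lemma mexp_cv N A i j : (i < N)%nat -> (j < N)%nat ->
  Ccv (fun m => mexp_partial N A m i j) (mexp N A i j).
Proof. intros; apply mexp_spec; auto. Qed.

Lemma mexp_eq N A i j z : (i < N)%nat -> (j < N)%nat ->
  Ccv (fun m => mexp_partial N A m i j) z -> mexp N A i j = z.
Proof. intros. eapply Ccv_unique. apply mexp_cv; auto. auto. Qed.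

Definition veq N (v w : Vec) : Prop := forall i, (i < N)%nat -> v i = w i.
Definition vcomb m (B : Mat) (v : nat -> Vec) (k : nat) : Vec :=
  fun i => csum m (fun j => Cmul (B j k) (v j i)).

Lemma mapply_ext N A v w : veq N v w -> mapply N A v = mapply N A w.
Proof. intros H. unfold mapply. apply functional_extensionality; intros i.
  apply csum_ext; intros; rewrite H; auto. Qed.

Lemma mapply_mmul N A B v : mapply N (mmul N A B) v = mapply N A (mapply N B v).
Proof. unfold mapply, mmul. apply functional_extensionality; intros i.
  transitivity (csum N (fun k => csum N (fun l => Cmul (A i l) (Cmul (B l k) (v k))))).
  apply csum_ext; intros. rewrite <- csum_mul_r. apply csum_ext; intros; ring.
  rewrite csum_swap. apply csum_ext; intros. rewrite <- csum_mul_l. auto. Qed.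

Lemma mapply_lin N A m (c : nat -> C) (v : nat -> Vec) :
  mapply N A (fun i => csum m (fun j => Cmul (c j) (v j i))) =
  fun i => csum m (fun j => Cmul (c j) (mapply N A (v j) i)).
Proof. unfold mapply. apply functional_extensionality; intros i.
  transitivity (csum N (fun k => csum m (fun j => Cmul (c j) (Cmul (A i k) (v j k))))).
  apply csum_ext; intros. rewrite <- csum_mul_l. apply csum_ext; intros; ring.
  rewrite csum_swap. apply csum_ext; intros. rewrite <- csum_mul_l. auto. Qed.

Lemma mapply_mscale N c A v : mapply N (mscale c A) v = fun i => Cmul c (mapply N A v i).
Proof. unfold mapply, mscale. apply functional_extensionality; intros i.
  rewrite <- csum_mul_l. apply csum_ext; intros; ring. Qed.

Lemma mapply_madd N A B v : mapply N (madd A B) v = fun i => Cadd (mapply N A v i) (mapply N B v i).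
Proof. unfold mapply, madd. apply functional_extensionality; intros i.
  rewrite <- csum_add. apply csum_ext; intros; ring. Qed.

Lemma mapply_mid N v : veq N (mapply N mid v) v.
Proof. intros i Hi. unfold mapply, mid.
  transitivity (Cmul C1 (v i)); [|ring].
  rewrite <- (csum_delta_lt N i (fun k => Cmul C1 (v k))) by auto.
  apply csum_ext; intros. rewrite (Nat.eqb_sym i k). destruct (Nat.eqb k i); ring. Qed.

Lemma vcomb_mid m v k : (k < m)%nat -> vcomb m mid v k = v k.
Proof. intros Hk. unfold vcomb, mid. apply functional_extensionality; intros i.
  transitivity (Cmul C1 (v k i)); [|ring].
  rewrite <- (csum_delta_lt m k (fun j => Cmul C1 (v j i))) by auto.
  apply csum_ext; intros j _. destruct (Nat.eqb j k); ring. Qed.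

Section Family.
Variables (N m : nat) (H B : Mat) (v : nat -> Vec) (s : C).
Hypothesis Hfam : forall k, (k < m)%nat -> veq N (mapply N H (v k)) (vcomb m B v k).

Lemma fam_pow q : forall k, (k < m)%nat ->
  veq N (mapply N (mpow N (mscale s H) q) (v k)) (vcomb m (mpow m (mscale s B) q) v k).
Proof.
  induction q; intros k Hk; simpl.
  - rewrite vcomb_mid by auto. apply mapply_mid.
  - rewrite mapply_mmul. rewrite mapply_mscale.
    rewrite (mapply_ext N _ (fun i => Cmul s (mapply N H (v k) i))
               (fun i => csum m (fun j => Cmul (Cmul s (B j k)) (v j i)))).
    2:{ intros i Hi. rewrite Hfam by auto. unfold vcomb. rewrite <- csum_mul_l.
        apply csum_ext; intros; ring. }
    rewrite mapply_lin. intros i Hi.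
    transitivity (csum m (fun j => Cmul (Cmul s (B j k))
          (vcomb m (mpow m (mscale s B) q) v j i))).
    apply csum_ext; intros. rewrite IHq; auto.
    unfold vcomb, mmul, mscale.
    transitivity (csum m (fun j => csum m (fun l => Cmul (Cmul s (B j k)) (Cmul (mpow m (fun i0 j0 => Cmul s (B i0 j0)) q l j) (v l i))))).
    apply csum_ext; intros. rewrite <- csum_mul_l. auto.
    rewrite csum_swap. apply csum_ext; intros. rewrite <- csum_mul_r. apply csum_ext; intros. ring.
Qed.

Lemma fam_partial p : forall k, (k < m)%nat ->
  veq N (mapply N (mexp_partial N (mscale s H) p) (v k)) (vcomb m (mexp_partial m (mscale s B) p) v k).
Proof.
  induction p; intros k Hk; cbn [mexp_partial].
  - rewrite vcomb_mid by auto. apply mapply_mid.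
  - rewrite mapply_madd, mapply_mscale. intros i Hi. rewrite IHp by auto.
    rewrite fam_pow by auto. unfold vcomb, madd, mscale.
    rewrite <- csum_mul_l, <- csum_add. apply csum_ext; intros; ring.
Qed.

Lemma fam_exp : forall k, (k < m)%nat ->
  veq N (mapply N (mexp N (mscale s H)) (v k)) (vcomb m (mexp m (mscale s B)) v k).
Proof.
  intros k Hk i Hi.
  eapply Ccv_unique.
  - unfold mapply. apply Ccv_csum. intros l Hl. apply Ccv_mul. apply mexp_cv; auto. apply Ccv_const.
  - eapply Ccv_ext. intros p. symmetry. apply (fam_partial p k Hk i Hi).
    unfold vcomb. apply Ccv_csum. intros j Hj. apply Ccv_mul. apply mexp_cv; auto. apply Ccv_const.
Qed.
End Family.

Fixpoint bin (k q : nat) : nat :=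
  match k, q with
  | _, O => 1%nat
  | O, S _ => 0%nat
  | S k', S q' => (bin k' q' + bin k' (S q'))%nat
  end.

Lemma bin_gt k q : (k < q)%nat -> bin k q = 0%nat.
Proof. revert q; induction k; intros q H; destruct q; simpl; try lia; auto.
  rewrite !IHk by lia. auto. Qed.

Lemma bin_fact k q : (q <= k)%nat -> (bin k q * fact q * fact (k - q))%nat = fact k.
Proof.
  revert q; induction k; intros q Hq.
  - destruct q; [simpl; auto | lia].
  - destruct q. simpl bin. rewrite Nat.sub_0_r. simpl (fact 0). lia.
    simpl bin. replace (S k - S q)%nat with (k - q)%nat by lia.
    destruct (Nat.eq_dec q k).
    + subst. rewrite (bin_gt k (S k)) by lia. rewrite Nat.sub_diag.
      pose proof (IHk k (le_n k)). rewrite Nat.sub_diag in H. simpl fact in *. nia.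
    + pose proof (IHk q ltac:(lia)). pose proof (IHk (S q) ltac:(lia)).
      replace (k - q)%nat with (S (k - S q)) in * by lia.
      simpl fact in *. nia.
Qed.

Lemma bin_0 k : bin k 0 = 1%nat. Proof. destruct k; auto. Qed.

Fixpoint Cpow (c : C) (k : nat) : C := match k with O => C1 | S k' => Cmul (Cpow c k') c end.

Lemma Cmod_Cpow c k : Cmod (Cpow c k) = Cmod c ^ k.
Proof. induction k; simpl. apply Cmod_C1. rewrite Cmod_mul, IHk. ring. Qed.

Lemma Cpow_RtoC x k : Cpow (RtoC x) k = RtoC (x ^ k).
Proof. induction k; simpl. auto. rewrite IHk. apply Cext; simpl; ring. Qed.

Lemma Cpow_0 k : Cpow C0 (S k) = C0.
Proof. simpl. ring. Qed.

Lemma csum_last N f : csum (S N) f = Cadd (csum N f) (f N).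
Proof. reflexivity. Qed.

Lemma mpow_shift N c A k i j : (j < N)%nat ->
  mpow N (madd (mscale c mid) A) k i j =
  csum (S k) (fun q => Cmul (RtoC (INR (bin k q))) (Cmul (Cpow c (k - q)) (mpow N A q i j))).
Proof.
  revert i j. induction k; intros i j Hj.
  - simpl. apply Cext; simpl; ring.
  - change (mpow N (madd (mscale c mid) A) (S k)) with
      (mmul N (mpow N (madd (mscale c mid) A) k) (madd (mscale c mid) A)).
    unfold mmul at 1.
    transitivity (Cadd (Cmul c (mpow N (madd (mscale c mid) A) k i j))
      (csum N (fun l => Cmul (mpow N (madd (mscale c mid) A) k i l) (A l j)))).
    { transitivity (csum N (fun l => Cadd (if Nat.eqb l j then Cmul c (mpow N (madd (mscale c mid) A) k i l) else C0)
                     (Cmul (mpow N (madd (mscale c mid) A) k i l) (A l j)))).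
      apply csum_ext; intros l Hl.
      replace (madd (mscale c mid) A l j) with (Cadd (if Nat.eqb l j then c else C0) (A l j))
        by (unfold madd, mscale, mid; destruct (Nat.eqb l j); ring).
      destruct (Nat.eqb l j); ring.
      rewrite csum_add, csum_delta_lt by auto. auto. }
    rewrite IHk by auto.
    transitivity (Cadd (Cmul c (csum (S k) (fun q => Cmul (RtoC (INR (bin k q))) (Cmul (Cpow c (k - q)) (mpow N A q i j)))))
      (csum (S k) (fun q => Cmul (RtoC (INR (bin k q))) (Cmul (Cpow c (k - q)) (mpow N A (S q) i j))))).
    { f_equal.
      transitivity (csum N (fun l => csum (S k) (fun q => Cmul (Cmul (RtoC (INR (bin k q))) (Cpow c (k - q))) (Cmul (mpow N A q i l) (A l j))))).
      apply csum_ext; intros l Hl. rewrite IHk by auto. rewrite <- csum_mul_r. apply csum_ext; intros; ring.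
      rewrite csum_swap. apply csum_ext; intros q Hq.
      change (mpow N A (S q) i j) with (mmul N (mpow N A q) A i j). unfold mmul.
      rewrite <- csum_mul_l, <- csum_mul_l. apply csum_ext; intros; ring. }
    rewrite (csum_shift (S k)). simpl (bin (S k) 0). rewrite Nat.sub_0_r.
    transitivity (Cadd (Cmul (RtoC (INR 1)) (Cmul (Cpow c (S k)) (mpow N A 0 i j)))
      (csum (S k) (fun q => Cadd (Cmul (RtoC (INR (bin k q))) (Cmul (Cpow c (k - q)) (mpow N A (S q) i j)))
                                 (Cmul (RtoC (INR (bin k (S q)))) (Cmul (Cpow c (k - q)) (mpow N A (S q) i j)))))).
    2:{ f_equal. apply csum_ext; intros q Hq. simpl bin. replace (S k - S q)%nat with (k - q)%nat by lia.
        rewrite plus_INR. apply Cext; simpl; ring. }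
    rewrite csum_add.
    rewrite <- csum_mul_l. rewrite csum_shift. rewrite Nat.sub_0_r.
    rewrite (csum_last k (fun q => Cmul (RtoC (INR (bin k (S q)))) (Cmul (Cpow c (k - q)) (mpow N A (S q) i j)))).
    rewrite (bin_gt k (S k)) by lia.
    assert (E : csum k (fun k0 => Cmul c (Cmul (RtoC (INR (bin k (S k0)))) (Cmul (Cpow c (k - S k0)) (mpow N A (S k0) i j))))
      = csum k (fun q => Cmul (RtoC (INR (bin k (S q)))) (Cmul (Cpow c (k - q)) (mpow N A (S q) i j)))).
    { apply csum_ext; intros q Hq. replace (k - q)%nat with (S (k - S q)) by lia. simpl Cpow. ring. }
    rewrite E. rewrite bin_0. simpl Cpow. simpl INR. change (RtoC 1) with C1; change (RtoC 0) with C0. ring.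
Qed.

Lemma fact_INR_ne0 k : INR (fact k) <> 0.
Proof. apply not_0_INR, fact_neq_0. Qed.

Definition Tshift N c A i j (a q : nat) : C :=
  Cmul (Cmul (Cpow c a) (RtoC (/ INR (fact a)))) (Cmul (mpow N A q i j) (RtoC (/ INR (fact q)))).

Lemma mterm_shift N c A k i j : (j < N)%nat ->
  mterm N (madd (mscale c mid) A) k i j = csum (S k) (fun q => Tshift N c A i j (k - q) q).
Proof.
  intros Hj. unfold mterm, mscale at 1. rewrite mpow_shift by auto.
  rewrite <- csum_mul_l. apply csum_ext; intros q Hq. unfold Tshift.
  pose proof (bin_fact k q ltac:(lia)) as Hb.
  assert (HR : INR (bin k q) * / INR (fact k) = / INR (fact (k - q)) * / INR (fact q)).
  { assert (Hb' : INR (fact k) = INR (bin k q) * INR (fact q) * INR (fact (k - q)))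
      by (rewrite <- Hb, !mult_INR; auto).
    pose proof (fact_INR_ne0 q). pose proof (fact_INR_ne0 (k-q)). pose proof (fact_INR_ne0 k).
    assert (INR (bin k q) <> 0) by (intro Z; rewrite Z in Hb'; apply H1; rewrite Hb'; ring).
    rewrite Hb'. field. auto. }
  transitivity (Cmul (RtoC (INR (bin k q) * / INR (fact k))) (Cmul (Cpow c (k - q)) (mpow N A q i j))).
  apply Cext; simpl; ring. rewrite HR. apply Cext; simpl; ring.
Qed.

Lemma cauchy_rearr M (T : nat -> nat -> C) :
  csum M (fun a => csum M (fun q => T a q)) =
  Cadd (csum M (fun k => csum (S k) (fun q => T (k - q)%nat q)))
       (csum M (fun a => csum M (fun q => if Nat.leb M (a + q) then T a q else C0))).
Proof.
  assert (K : forall M, csum M (fun a => csum M (fun q => if Nat.ltb (a + q) M then T a q else C0)) =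
                        csum M (fun k => csum (S k) (fun q => T (k - q)%nat q))).
  { clear M. induction M. reflexivity.
    rewrite (csum_last M (fun k => csum (S k) (fun q => T (k - q)%nat q))). rewrite <- IHM.
    transitivity (Cadd (csum (S M) (fun a => csum (S M) (fun q => if Nat.ltb (a + q) M then T a q else C0)))
                       (csum (S M) (fun a => csum (S M) (fun q => if Nat.eqb a (M - q) then (if Nat.leb q M then T a q else C0) else C0)))).
    { rewrite <- csum_add. apply csum_ext; intros a Ha. rewrite <- csum_add. apply csum_ext; intros q Hq.
      destruct (Nat.ltb (a+q) (S M)) eqn:E1; destruct (Nat.ltb (a+q) M) eqn:E2; destruct (Nat.eqb a (M-q)) eqn:E3;
        destruct (Nat.leb q M) eqn:E4;
        rewrite ?Nat.ltb_lt, ?Nat.ltb_ge, ?Nat.eqb_eq, ?Nat.eqb_neq, ?Nat.leb_le, ?Nat.leb_gt in *; try lia; ring. }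
    f_equal.
    - rewrite csum_last.
      replace (csum (S M) (fun q : nat => if M + q <? M then T M q else C0)) with C0.
      2:{ symmetry. etransitivity; [|apply (csum_0 (S M))]. apply csum_ext; intros q Hq.
          replace (Nat.ltb (M+q) M) with false by (symmetry; apply Nat.ltb_ge; lia). auto. }
      transitivity (csum M (fun a : nat => csum (S M) (fun q : nat => if a + q <? M then T a q else C0))); [ring|].
      apply csum_ext; intros a Ha. rewrite csum_last.
      replace (Nat.ltb (a+M) M) with false by (symmetry; apply Nat.ltb_ge; lia). ring.
    - rewrite csum_swap. apply csum_ext; intros q Hq.
      rewrite csum_delta_lt by lia. replace (Nat.leb q M) with true by (symmetry; apply Nat.leb_le; lia). auto. }
  rewrite <- K. rewrite <- csum_add. apply csum_ext; intros a Ha. rewrite <- csum_add. apply csum_ext; intros q Hq.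
  destruct (Nat.ltb (a+q) M) eqn:E1; destruct (Nat.leb M (a+q)) eqn:E2;
    rewrite ?Nat.ltb_lt, ?Nat.ltb_ge, ?Nat.leb_le, ?Nat.leb_gt in *; try lia; ring.
Qed.

Lemma mpow1 Y k : mpow 1 Y k 0%nat 0%nat = Cpow (Y 0%nat 0%nat) k.
Proof. induction k. reflexivity.
  change (mpow 1 Y (S k) 0%nat 0%nat) with (Cadd C0 (Cmul (mpow 1 Y k 0%nat 0%nat) (Y 0%nat 0%nat))).
  rewrite IHk. simpl. ring. Qed.

Definition spart c p := csum (S p) (fun a => Cmul (Cpow c a) (RtoC (/ INR (fact a)))).
Definition escal c := mexp 1 (fun _ _ => c) 0%nat 0%nat.

Lemma escal_cv c : Ccv (spart c) (escal c).
Proof.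
  eapply Ccv_ext; [|apply (mexp_cv 1 (fun _ _ => c) 0 0); lia].
  intros p. cbv beta. rewrite mexp_partial_csum. unfold spart. apply csum_ext; intros k _.
  unfold mterm, mscale. rewrite mpow1. ring.
Qed.

Lemma csum_prod M K f g : Cmul (csum M f) (csum K g) = csum M (fun a => csum K (fun q => Cmul (f a) (g q))).
Proof. rewrite <- csum_mul_r. apply csum_ext; intros. rewrite <- csum_mul_l. auto. Qed.

Lemma Cre_prod_real M K f g :
  Cre (Cmul (csum M (fun k => RtoC (f k))) (csum K (fun k => RtoC (g k)))) = rsum M f * rsum K g.
Proof. unfold rsum. simpl. rewrite !Cim_csum_RtoC. ring. Qed.

Lemma mexp_shift N c A i j : (i < N)%nat -> (j < N)%nat ->
  mexp N (madd (mscale c mid) A) i j = Cmul (escal c) (mexp N A i j).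
Proof.
  intros Hi Hj. apply mexp_eq; auto.
  set (g := Cmod c). set (al := matnorm N A).
  set (U := fun a q => RtoC (g ^ a * / INR (fact a) * (al ^ q * / INR (fact q)))).
  set (d := fun p => Cre (csum (S p) (fun a => csum (S p) (fun q => if Nat.leb (S p) (a + q) then U a q else C0)))).
  apply (Ccv_close _ (fun p => Cmul (spart c p) (mexp_partial N A p i j)) _ d).
  - apply Ccv_mul. apply escal_cv. apply mexp_cv; auto.
  -
    assert (HG : forall p, Cre (csum (S p) (fun a => csum (S p) (fun q => U a q))) =
       sum_f_R0 (fun k => / INR (fact k) * g ^ k) p * sum_f_R0 (fun k => / INR (fact k) * al ^ k) p).
    { intros p. unfold U.
      transitivity (Cre (Cmul (csum (S p) (fun k => RtoC (g ^ k * / INR (fact k)))) (csum (S p) (fun k => RtoC (al ^ k * / INR (fact k)))))).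
      rewrite csum_prod. f_equal. apply csum_ext; intros; apply csum_ext; intros. apply Cext; simpl; ring.
      rewrite Cre_prod_real, !rsum_sum. f_equal; apply sum_eq; intros; ring. }
    assert (HL : forall p, Cre (csum (S p) (fun k => csum (S k) (fun q => U (k - q)%nat q))) =
       sum_f_R0 (fun k => / INR (fact k) * (g + al) ^ k) p).
    { intros p. rewrite <- rsum_sum. unfold rsum. f_equal. apply csum_ext; intros k Hk.
      transitivity (mterm 1 (madd (mscale (RtoC g) mid) (fun _ _ => RtoC al)) k 0%nat 0%nat).
      rewrite mterm_shift by lia. apply csum_ext; intros q Hq. unfold Tshift, U.
      rewrite Cpow_RtoC, mpow1, Cpow_RtoC. apply Cext; simpl; ring.
      unfold mterm, mscale. rewrite mpow1. unfold madd, mscale, mid. simpl.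
      replace (Cadd (Cmul (RtoC g) C1) (RtoC al)) with (RtoC (g + al)) by (apply Cext; simpl; ring).
      rewrite Cpow_RtoC. apply Cext; simpl; ring. }
    assert (Hd : forall p, d p = sum_f_R0 (fun k => / INR (fact k) * g ^ k) p * sum_f_R0 (fun k => / INR (fact k) * al ^ k) p
                                 - sum_f_R0 (fun k => / INR (fact k) * (g + al) ^ k) p).
    { intros p. rewrite <- HG, <- HL. rewrite (cauchy_rearr (S p) U), Cre_add. unfold d. ring. }
    eapply Un_cv_ext. intros p; symmetry; apply Hd.
    replace 0 with (exp g * exp al - exp (g + al)) by (rewrite exp_plus; ring).
    apply CV_minus. apply CV_mult; apply exp_cv. apply exp_cv.
  - intros p. rewrite mexp_partial_csum.
    rewrite (csum_ext (S p) _ (fun k => csum (S k) (fun q => Tshift N c A i j (k - q) q))) by (intros; apply mterm_shift; auto).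
    assert (E : Cmul (spart c p) (mexp_partial N A p i j) = csum (S p) (fun a => csum (S p) (fun q => Tshift N c A i j a q))).
    { rewrite mexp_partial_csum. unfold spart. rewrite csum_prod. apply csum_ext; intros; apply csum_ext; intros.
      unfold Tshift, mterm, mscale. ring. }
    rewrite E, cauchy_rearr.
    set (R := csum (S p) (fun a => csum (S p) (fun q => if Nat.leb (S p) (a + q) then Tshift N c A i j a q else C0))).
    replace (Cadd _ (Copp (Cadd _ R))) with (Copp R) by ring. rewrite Cmod_opp.
    unfold R, d. eapply Rle_trans. apply Cmod_csum_r. rewrite Cre_csum. fold (rsum (S p) (fun k => Cre (csum (S p) (fun q => if Nat.leb (S p) (k + q) then U k q else C0)))).
    apply rsum_le; intros a Ha. eapply Rle_trans. apply Cmod_csum_r. rewrite Cre_csum. apply rsum_le; intros q Hq.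
    destruct (Nat.leb (S p) (a + q)). 2:{ rewrite Cmod_C0. simpl; lra. }
    unfold Tshift, U. simpl Cre. rewrite !Cmod_mul, Cmod_Cpow, !Cmod_RtoC.
    rewrite !Rabs_right by (left; apply Rinv_0_lt_compat, INR_fact_lt_0).
    pose proof (mpow_bound N A q i j Hj). fold al in H.
    pose proof (Rinv_0_lt_compat _ (INR_fact_lt_0 a)). pose proof (Rinv_0_lt_compat _ (INR_fact_lt_0 q)).
    assert (0 <= g ^ a) by (apply pow_le, Cmod_ge0).
    fold g. apply Rmult_le_compat. apply Rmult_le_pos; lra. apply Rmult_le_pos. apply Cmod_ge0. lra.
    lra. apply Rmult_le_compat_r; lra.
Qed.

Lemma escal_inv c : Cmul (escal c) (escal (Copp c)) = C1.
Proof.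
  pose proof (mexp_shift 1 c (fun _ _ => Copp c) 0 0 ltac:(lia) ltac:(lia)) as H.
  fold (escal (Copp c)) in H. rewrite <- H. apply mexp_eq; try lia.
  eapply Ccv_ext; [|apply (Ccv_const C1)]. intros p. rewrite mexp_partial_csum.
  induction p. unfold mterm, mscale. simpl. apply Cext; simpl; rewrite Rinv_1; ring.
  rewrite csum_last, <- IHp. unfold mterm, mscale. rewrite mpow1.
  set (z := madd _ _ 0%nat 0%nat). assert (Hz : z = C0) by (unfold z, madd, mid; simpl; ring).
  rewrite Hz, Cpow_0. ring.
Qed.

Definition ev (x : nat) : Vec := fun i => if Nat.eqb i x then C1 else C0.

Lemma vnorm_eq N v : vnorm N v = sqrt (rsum N (fun k => Cmod (v k) ^ 2)).
Proof. reflexivity. Qed.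

Lemma vnorm_ext N v w : veq N v w -> vnorm N v = vnorm N w.
Proof. intros H. rewrite !vnorm_eq. f_equal. apply rsum_ext; intros; rewrite H; auto. Qed.

Lemma rsum_delta N x a : (x < N)%nat -> rsum N (fun k => if Nat.eqb k x then a else 0) = a.
Proof. intros Hx. unfold rsum.
  transitivity (Cre (csum N (fun k => if Nat.eqb k x then RtoC a else C0))).
  f_equal; apply csum_ext; intros; destruct (Nat.eqb k x); auto.
  rewrite csum_delta_lt; auto. Qed.

Lemma vnorm_ev N x z : (x < N)%nat -> vnorm N (fun i => Cmul z (ev x i)) = Cmod z.
Proof. intros Hx. rewrite vnorm_eq.
  rewrite (rsum_ext _ _ (fun k => if Nat.eqb k x then Cmod z ^ 2 else 0)).
  rewrite rsum_delta by auto. apply sqrt_pow2, Cmod_ge0.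
  intros k _. unfold ev. destruct (Nat.eqb k x). replace (Cmul z C1) with z by ring. auto.
  replace (Cmul z C0) with C0 by ring. rewrite Cmod_C0. ring.
Qed.

Lemma vnorm_le1_entry N v k : vnorm N v <= 1 -> (k < N)%nat -> Cmod (v k) <= 1.
Proof.
  intros H Hk. rewrite vnorm_eq in H.
  set (S := rsum N (fun k => Cmod (v k) ^ 2)) in H.
  assert (HS0 : 0 <= S) by (apply rsum_ge0; intros; apply pow2_ge_0).
  assert (HS : S <= 1).
  { destruct (Rle_dec S 1); auto. exfalso. assert (1 < sqrt S).
    rewrite <- sqrt_1. apply sqrt_lt_1_alt. lra. lra. }
  assert (Cmod (v k) ^ 2 <= S) by (apply (rsum_single N (fun k => Cmod (v k) ^ 2)); auto; intros; apply pow2_ge_0).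
  pose proof (Cmod_ge0 (v k)). nra.
Qed.

Lemma opnorm_ge N A v : vnorm N v <= 1 -> vnorm N (mapply N A v) <= opnorm N A.
Proof.
  intros Hv.
  set (E := fun r => exists v : Vec, vnorm N v <= 1 /\ r = vnorm N (mapply N A v)).
  set (m := matnorm N A).
  assert (Hb : bound E).
  { exists (sqrt (rsum N (fun _ => m ^ 2))). intros r [w [Hw ->]].
    rewrite vnorm_eq. apply sqrt_le_1_alt. apply rsum_le. intros i Hi.
    assert (Cmod (mapply N A w i) <= m).
    { unfold mapply. eapply Rle_trans. apply Cmod_csum_r.
      eapply Rle_trans. apply (rsum_le _ _ (fun k => Cmod (A i k))).
      intros k Hk. rewrite Cmod_mul. pose proof (vnorm_le1_entry N w k Hw Hk).
      pose proof (Cmod_ge0 (A i k)). pose proof (Cmod_ge0 (w k)). nra.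
      apply (rsum_single N (fun i => rsum N (fun k => Cmod (A i k)))); auto.
      intros; apply rsum_ge0; intros; apply Cmod_ge0. }
    pose proof (Cmod_ge0 (mapply N A w i)). nra. }
  assert (He : exists x, E x) by (exists (vnorm N (mapply N A v)); exists v; auto).
  destruct (completeness E Hb He) as [l Hl].
  assert (Hop : is_lub E (opnorm N A)).
  { unfold opnorm. apply epsilon_spec. exists l; auto. }
  apply Hop. exists v; auto.
Qed.

Lemma tb_ones n m : Nat.testbit (Nat.ones n) m = Nat.ltb m n.
Proof. destruct (Nat.ltb_spec m n). apply Nat.ones_spec_low; auto. apply Nat.ones_spec_high; auto. Qed.

Ltac bitcases :=
  repeat match goal with
  | |- context [Nat.eqb ?a ?b] => destruct (Nat.eqb_spec a b)
  | |- context [Nat.ltb ?a ?b] => destruct (Nat.ltb_spec a b)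
  end; simpl; rewrite ?andb_false_r, ?andb_true_r, ?orb_false_r, ?orb_true_r; try lia; auto.

Ltac bits := apply Nat.bits_inj; intro m;
  repeat first [rewrite Nat.setbit_eqb | rewrite Nat.clearbit_eqb | rewrite tb_ones]; bitcases.

Lemma lt_pow_of_bits x n : (forall m, (n <= m)%nat -> Nat.testbit x m = false) -> (x < 2 ^ n)%nat.
Proof. intros H. assert (x = x mod 2 ^ n).
  { apply Nat.bits_inj. intro m. destruct (Nat.lt_ge_cases m n).
    rewrite Nat.mod_pow2_bits_low; auto. rewrite Nat.mod_pow2_bits_high, H; auto. }
  rewrite H0. apply Nat.mod_upper_bound. apply Nat.pow_nonzero. lia. Qed.

Lemma bits_of_lt x n m : (x < 2 ^ n)%nat -> (n <= m)%nat -> Nat.testbit x m = false.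
Proof. intros H Hm. rewrite <- (Nat.mod_small x (2^n)) by auto. apply Nat.mod_pow2_bits_high; auto. Qed.

Definition flip x k := if Nat.testbit x k then Nat.clearbit x k else Nat.setbit x k.

Lemma flip_lt x k n : (x < 2 ^ n)%nat -> (k < n)%nat -> (flip x k < 2 ^ n)%nat.
Proof. intros Hx Hk. apply lt_pow_of_bits. intros m Hm. unfold flip.
  destruct (Nat.testbit x k); rewrite ?Nat.setbit_eqb, ?Nat.clearbit_eqb; rewrite (bits_of_lt x n m) by auto;
  bitcases. Qed.

Lemma tb_flip_neq x k m : k <> m -> Nat.testbit (flip x k) m = Nat.testbit x m.
Proof. intros H. unfold flip. destruct (Nat.testbit x k). apply Nat.clearbit_neq; auto. apply Nat.setbit_neq; auto. Qed.
Lemma tb_flip_eq x k : Nat.testbit (flip x k) k = negb (Nat.testbit x k).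
Proof. unfold flip. destruct (Nat.testbit x k). apply Nat.clearbit_eq. apply Nat.setbit_eq. Qed.

Lemma mapply_col N A x : (x < N)%nat -> mapply N A (ev x) = fun i => A i x.
Proof. intros Hx. unfold mapply, ev. apply functional_extensionality; intros i.
  transitivity (Cmul C1 (A i x)); [|ring].
  rewrite <- (csum_delta_lt N x (fun k => Cmul C1 (A i k))) by auto.
  apply csum_ext; intros k _. destruct (Nat.eqb k x); ring. Qed.

Lemma mapply_scal N A c v : mapply N A (fun i => Cmul c (v i)) = fun i => Cmul c (mapply N A v i).
Proof. unfold mapply. apply functional_extensionality; intros i. rewrite <- csum_mul_l.
  apply csum_ext; intros; ring. Qed.

Lemma mapply_vadd N A u w : mapply N A (fun i => Cadd (u i) (w i)) = fun i => Cadd (mapply N A u i) (mapply N A w i).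
Proof. unfold mapply. apply functional_extensionality; intros i. rewrite <- csum_add.
  apply csum_ext; intros; ring. Qed.

Lemma mapply_zero N A : mapply N A (fun _ => C0) = fun _ => C0.
Proof. unfold mapply. apply functional_extensionality; intros i. transitivity (csum N (fun _ => C0)).
  apply csum_ext; intros; ring. apply csum_0. Qed.

Definition bit (x k : nat) := Nat.testbit x k.

Lemma site_col j s x i : (1 <= j)%nat ->
  site_op j s i x =
  Cadd (if Nat.eqb i (Nat.clearbit x (j-1)) then s 0%nat (bitv x (j-1)) else C0)
       (if Nat.eqb i (Nat.setbit x (j-1)) then s 1%nat (bitv x (j-1)) else C0).
Proof.
  intros Hj. unfold site_op. set (k := (j-1)%nat).
  assert (Hcs : Nat.clearbit x k <> Nat.setbit x k).
  { intro E. assert (F := f_equal (fun y => Nat.testbit y k) E). simpl in F.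
    rewrite Nat.clearbit_eq, Nat.setbit_eq in F. discriminate. }
  destruct (Nat.eqb_spec (Nat.clearbit i k) (Nat.clearbit x k)) as [E|E].
  - assert (Hi : i = if Nat.testbit i k then Nat.setbit x k else Nat.clearbit x k).
    { apply Nat.bits_inj; intro m. destruct (Nat.eq_dec k m).
      - subst m. destruct (Nat.testbit i k) eqn:T. rewrite Nat.setbit_eq; auto. rewrite Nat.clearbit_eq; auto.
      - assert (F := f_equal (fun y => Nat.testbit y m) E). simpl in F.
        rewrite !Nat.clearbit_neq in F by auto.
        destruct (Nat.testbit i k); rewrite ?Nat.setbit_neq, ?Nat.clearbit_neq by auto; auto. }
    unfold bitv. destruct (Nat.testbit i k) eqn:T; rewrite Hi.
    + rewrite (proj2 (Nat.eqb_neq _ _)) by auto. rewrite Nat.eqb_refl. ring.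
    + rewrite Nat.eqb_refl. rewrite (proj2 (Nat.eqb_neq (Nat.clearbit x k) (Nat.setbit x k))) by auto. ring.
  - assert (H1 : i <> Nat.clearbit x k).
    { intro Hi. apply E. subst i. bits. }
    assert (H2 : i <> Nat.setbit x k).
    { intro Hi. apply E. subst i. bits. }
    rewrite (proj2 (Nat.eqb_neq _ _)) by auto. rewrite (proj2 (Nat.eqb_neq _ _)) by auto. ring.
Qed.

Section Sites.
Variable n : nat.
Let N := dimH n.

Lemma setbit_lt x k : (x < N)%nat -> (k < n)%nat -> (Nat.setbit x k < N)%nat.
Proof. intros Hx Hk. apply lt_pow_of_bits. intros m Hm. rewrite Nat.setbit_eqb.
  rewrite (bits_of_lt x n m) by auto. bitcases. Qed.
Lemma clearbit_lt x k : (x < N)%nat -> (Nat.clearbit x k < N)%nat.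
Proof. intros Hx. apply lt_pow_of_bits. intros m Hm. rewrite Nat.clearbit_eqb.
  rewrite (bits_of_lt x n m) by auto. bitcases. Qed.

Lemma site_ev j s x : (1 <= j)%nat -> (x < N)%nat ->
  mapply N (site_op j s) (ev x) = fun i =>
  Cadd (if Nat.eqb i (Nat.clearbit x (j-1)) then s 0%nat (bitv x (j-1)) else C0)
       (if Nat.eqb i (Nat.setbit x (j-1)) then s 1%nat (bitv x (j-1)) else C0).
Proof. intros Hj Hx. rewrite mapply_col by auto. apply functional_extensionality; intros i.
  apply site_col; auto. Qed.

Lemma setbit_same x k : Nat.testbit x k = true -> Nat.setbit x k = x.
Proof. intros T. apply Nat.bits_inj; intro m. rewrite Nat.setbit_eqb. destruct (Nat.eqb_spec k m); subst; simpl; auto. Qed.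
Lemma clearbit_same x k : Nat.testbit x k = false -> Nat.clearbit x k = x.
Proof. intros T. apply Nat.bits_inj; intro m. rewrite Nat.clearbit_eqb. destruct (Nat.eqb_spec k m); subst; simpl;
  rewrite ?andb_true_r, ?andb_false_r; auto. Qed.

Lemma sx_ev j x : (1 <= j)%nat -> (x < N)%nat ->
  mapply N (sx j) (ev x) = ev (flip x (j-1)).
Proof. intros Hj Hx. unfold sx. rewrite site_ev by auto. apply functional_extensionality; intros i.
  unfold bitv, flip, ev. destruct (Nat.testbit x (j-1)); simpl;
  destruct (Nat.eqb i (Nat.clearbit x (j-1))); destruct (Nat.eqb i (Nat.setbit x (j-1))); ring. Qed.

Lemma sy_ev j x : (1 <= j)%nat -> (x < N)%nat ->
  mapply N (sy j) (ev x) = fun i => Cmul (if Nat.testbit x (j-1) then Copp Ci else Ci) (ev (flip x (j-1)) i).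
Proof. intros Hj Hx. unfold sy. rewrite site_ev by auto. apply functional_extensionality; intros i.
  unfold bitv, flip, ev. destruct (Nat.testbit x (j-1)); simpl;
  destruct (Nat.eqb i (Nat.clearbit x (j-1))); destruct (Nat.eqb i (Nat.setbit x (j-1))); ring. Qed.

Lemma sz_ev j x : (1 <= j)%nat -> (x < N)%nat ->
  mapply N (sz j) (ev x) = fun i => Cmul (if Nat.testbit x (j-1) then RtoC (-1) else C1) (ev x i).
Proof. intros Hj Hx. unfold sz. rewrite site_ev by auto. apply functional_extensionality; intros i.
  unfold bitv, ev. destruct (Nat.testbit x (j-1)) eqn:T; simpl.
  - rewrite (setbit_same x _ T). destruct (Nat.eqb i (Nat.clearbit x (j-1))); destruct (Nat.eqb i x); ring.
  - rewrite (clearbit_same x _ T). destruct (Nat.eqb i (Nat.setbit x (j-1))); destruct (Nat.eqb i x); ring.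
Qed.

End Sites.

Definition aop2 : Mat := fun a b => match a, b with 1, 0 => C1 | _, _ => C0 end%nat.
Definition astar2 : Mat := fun a b => match a, b with 0, 1 => C1 | _, _ => C0 end%nat.

Lemma a_op_site j : a_op j = site_op j aop2.
Proof.
  apply functional_extensionality; intros x. apply functional_extensionality; intros i.
  unfold a_op, msub, madd, mscale, sx, sy, site_op.
  destruct (Nat.eqb (Nat.clearbit x (j-1)) (Nat.clearbit i (j-1))).
  - unfold bitv. destruct (Nat.testbit x (j-1)); destruct (Nat.testbit i (j-1)); apply Cext; simpl; field.
  - apply Cext; simpl; field.
Qed.

Lemma a_star_site j : a_star j = site_op j astar2.
Proof.
  apply functional_extensionality; intros i. apply functional_extensionality; intros x.
  unfold a_star, madj. rewrite a_op_site. unfold site_op. rewrite Nat.eqb_sym.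
  destruct (Nat.eqb (Nat.clearbit i (j-1)) (Nat.clearbit x (j-1))).
  - unfold bitv. destruct (Nat.testbit x (j-1)); destruct (Nat.testbit i (j-1)); apply Cext; simpl; ring.
  - apply Cext; simpl; ring.
Qed.

Lemma mapply_msumf N K F v : mapply N (msumf K F) v = fun i => csum K (fun a => mapply N (F a) v i).
Proof. induction K; simpl.
  - unfold mapply, mzero. apply functional_extensionality; intros i.
    transitivity (csum N (fun _ => C0)). apply csum_ext; intros; ring. apply csum_0.
  - rewrite mapply_madd, IHK. auto. Qed.

Section Chain.
Variables (lam om : R) (n : nat).
Local Notation N := (dimH n).
Definition x0 := Nat.ones n.
Definition phi (k : nat) := Nat.clearbit x0 (k - 1).

Lemma x0_lt : (x0 < N)%nat.
Proof. apply lt_pow_of_bits. intros m Hm. unfold x0. rewrite tb_ones. bitcases. Qed.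
Lemma phi_lt k : (phi k < N)%nat.
Proof. apply clearbit_lt, x0_lt. Qed.

Lemma tb_x0 m : Nat.testbit x0 m = Nat.ltb m n.
Proof. apply tb_ones. Qed.
Lemma tb_phi k m : Nat.testbit (phi k) m = (Nat.ltb m n && negb (Nat.eqb (k-1) m))%bool.
Proof. unfold phi. rewrite Nat.clearbit_eqb, tb_x0. auto. Qed.

Lemma astar_x0 r : (1 <= r <= n)%nat -> mapply N (a_star r) (ev x0) = ev (phi r).
Proof. intros Hr. rewrite a_star_site. rewrite site_ev by (auto using x0_lt; lia).
  apply functional_extensionality; intros i. unfold bitv. rewrite tb_x0.
  replace (Nat.ltb (r-1) n) with true by (symmetry; apply Nat.ltb_lt; lia). simpl.
  unfold ev, phi. destruct (Nat.eqb i (Nat.clearbit x0 (r-1))); destruct (Nat.eqb i (Nat.setbit x0 (r-1))); ring. Qed.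

Lemma aop_x0 l : (1 <= l <= n)%nat -> mapply N (a_op l) (ev x0) = fun _ => C0.
Proof. intros Hl. rewrite a_op_site. rewrite site_ev by (auto using x0_lt; lia).
  apply functional_extensionality; intros i. unfold bitv. rewrite tb_x0.
  replace (Nat.ltb (l-1) n) with true by (symmetry; apply Nat.ltb_lt; lia). simpl.
  destruct (Nat.eqb i (Nat.clearbit x0 (l-1))); destruct (Nat.eqb i (Nat.setbit x0 (l-1))); ring. Qed.

Lemma aop_phi l k : (1 <= l <= n)%nat -> (1 <= k <= n)%nat ->
  mapply N (a_op l) (ev (phi k)) = fun i => Cmul (if Nat.eqb k l then C1 else C0) (ev x0 i).
Proof. intros Hl Hk. rewrite a_op_site. rewrite site_ev by (auto using phi_lt; lia).
  apply functional_extensionality; intros i. unfold bitv. rewrite tb_phi.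
  replace (Nat.ltb (l-1) n) with true by (symmetry; apply Nat.ltb_lt; lia). simpl.
  destruct (Nat.eqb_spec k l).
  - subst. rewrite Nat.eqb_refl. simpl.
    replace (Nat.setbit (phi l) (l-1)) with x0 by (unfold phi, x0; bits).
    unfold ev. destruct (Nat.eqb i (Nat.clearbit (phi l) (l-1))); destruct (Nat.eqb i x0); ring.
  - replace (Nat.eqb (k-1) (l-1)) with false by (symmetry; apply Nat.eqb_neq; lia). simpl.
    destruct (Nat.eqb i (Nat.clearbit (phi k) (l-1))); destruct (Nat.eqb i (Nat.setbit (phi k) (l-1))); ring.
Qed.

Definition sg (m : nat) : C := RtoC ((-1) ^ m).

Lemma zstring_x0 m : (m <= n)%nat -> mapply N (zstring n m) (ev x0) = fun i => Cmul (sg m) (ev x0 i).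
Proof. induction m; intros Hm; simpl zstring.
  - rewrite mapply_col by apply x0_lt. apply functional_extensionality; intros i. unfold mid, ev, sg.
    destruct (Nat.eqb i x0); apply Cext; simpl; ring.
  - rewrite mapply_mmul. rewrite sz_ev by (auto using x0_lt; lia).
    replace (S m - 1)%nat with m by lia. rewrite tb_x0.
    replace (Nat.ltb m n) with true by (symmetry; apply Nat.ltb_lt; lia).
    rewrite mapply_scal, IHm by lia. apply functional_extensionality; intros i. unfold sg.
    apply Cext; simpl; ring.
Qed.

Lemma cop_x0 l : (1 <= l <= n)%nat -> mapply N (c_op n l) (ev x0) = fun _ => C0.
Proof. intros Hl. unfold c_op. rewrite mapply_mmul. rewrite aop_x0, mapply_zero by auto. auto. Qed.

Lemma cop_phi l k : (1 <= l <= n)%nat -> (1 <= k <= n)%nat ->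
  mapply N (c_op n l) (ev (phi k)) = fun i => Cmul (if Nat.eqb k l then sg (l - 1) else C0) (ev x0 i).
Proof. intros Hl Hk. unfold c_op. rewrite mapply_mmul. rewrite aop_phi by auto.
  rewrite mapply_scal, zstring_x0 by lia. apply functional_extensionality; intros i.
  destruct (Nat.eqb k l); ring. Qed.

End Chain.

Section Ham.
Variables (lam om : R) (n : nat).
Local Notation N := (dimH n).

Definition hop (j : nat) : Mat := madd (mmul N (sx j) (sx (S j))) (mmul N (sy j) (sy (S j))).

Lemma hop_ev j y : (1 <= j)%nat -> (j < n)%nat -> (y < N)%nat ->
  mapply N (hop j) (ev y) = fun i =>
   Cmul (if Bool.eqb (Nat.testbit y (j-1)) (Nat.testbit y j) then C0 else RtoC 2) (ev (flip (flip y j) (j-1)) i).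
Proof.
  intros Hj Hjn Hy. unfold hop. rewrite mapply_madd, !mapply_mmul.
  rewrite sx_ev, sy_ev by (auto; lia). replace (S j - 1)%nat with j by lia.
  assert (Hf : (flip y j < N)%nat) by (apply flip_lt; auto).
  rewrite sx_ev by auto. rewrite mapply_scal. rewrite sy_ev by auto.
  rewrite tb_flip_neq by lia.
  apply functional_extensionality; intros i.
  destruct (Nat.testbit y (j-1)); destruct (Nat.testbit y j); simpl; apply Cext; simpl; ring.
Qed.

Lemma H_XY_eq : H_XY lam om n = madd (mscale (RtoC (-1)) (msumf (n-1) (fun i => hop (S i))))
    (msumf n (fun i => mscale (RtoC (V lam om (S i))) (sz (S i)))).
Proof. reflexivity. Qed.

Definition E0 : C := csum n (fun a => RtoC (- V lam om (S a))).

Lemma pot_ev y : (y < N)%nat ->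
  mapply N (msumf n (fun i => mscale (RtoC (V lam om (S i))) (sz (S i)))) (ev y) =
  fun i => Cmul (csum n (fun a => Cmul (RtoC (V lam om (S a))) (if Nat.testbit y a then RtoC (-1) else C1))) (ev y i).
Proof.
  intros Hy. rewrite mapply_msumf. apply functional_extensionality; intros i.
  rewrite <- csum_mul_r. apply csum_ext; intros a Ha.
  rewrite mapply_mscale, sz_ev by (auto; lia). replace (S a - 1)%nat with a by lia. ring.
Qed.

Lemma H_x0 : mapply N (H_XY lam om n) (ev (x0 n)) = fun i => Cmul E0 (ev (x0 n) i).
Proof.
  rewrite H_XY_eq, mapply_madd, mapply_mscale, mapply_msumf, pot_ev by apply x0_lt.
  apply functional_extensionality; intros i.
  rewrite (csum_ext _ _ (fun _ => C0)). rewrite csum_0.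
  replace (csum n (fun a => Cmul (RtoC (V lam om (S a))) (if Nat.testbit (x0 n) a then RtoC (-1) else C1))) with E0.
  ring.
  unfold E0. apply csum_ext; intros a Ha. rewrite tb_x0. replace (Nat.ltb a n) with true by (symmetry; apply Nat.ltb_lt; lia).
  apply Cext; simpl; ring.
  intros a Ha. rewrite hop_ev by (auto using x0_lt; lia). rewrite !tb_x0.
  replace (Nat.ltb (S a - 1) n) with true by (symmetry; apply Nat.ltb_lt; lia).
  replace (Nat.ltb (S a) n) with true by (symmetry; apply Nat.ltb_lt; lia). simpl. ring.
Qed.

End Ham.

Lemma flip_true x k : Nat.testbit x k = true -> flip x k = Nat.clearbit x k.
Proof. unfold flip; intros ->; auto. Qed.
Lemma flip_false x k : Nat.testbit x k = false -> flip x k = Nat.setbit x k.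
Proof. unfold flip; intros ->; auto. Qed.

Section Ham2.
Variables (lam om : R) (n : nat).
Local Notation N := (dimH n).

Lemma hop_phi a k : (S a < n)%nat -> (1 <= k <= n)%nat ->
  mapply N (hop n (S a)) (ev (phi n k)) = fun i =>
  Cadd (if Nat.eqb a (k-1) then Cmul (RtoC 2) (ev (phi n (S k)) i) else C0)
       (if Nat.eqb (S a) (k-1) then Cmul (RtoC 2) (ev (phi n (k-1)) i) else C0).
Proof.
  intros Ha Hk. rewrite hop_ev by (auto using phi_lt; lia). replace (S a - 1)%nat with a by lia.
  rewrite !tb_phi.
  replace (Nat.ltb a n) with true by (symmetry; apply Nat.ltb_lt; lia).
  replace (Nat.ltb (S a) n) with true by (symmetry; apply Nat.ltb_lt; lia). cbn [andb].
  apply functional_extensionality; intros i.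
  destruct (Nat.eqb_spec a (k-1)); destruct (Nat.eqb_spec (S a) (k-1)); try lia;
  destruct (Nat.eqb_spec (k-1) a); destruct (Nat.eqb_spec (k-1) (S a)); try lia; cbn [negb Bool.eqb].
  - rewrite (flip_true (phi n k) (S a)) by (rewrite tb_phi; bitcases).
    rewrite (flip_false _ a) by (rewrite Nat.clearbit_neq by lia; rewrite tb_phi; bitcases).
    replace (Nat.setbit (Nat.clearbit (phi n k) (S a)) a) with (phi n (S k)) by (unfold phi, x0; bits).
    ring.
  - rewrite (flip_false (phi n k) (S a)) by (rewrite tb_phi; bitcases).
    rewrite (flip_true _ a) by (rewrite Nat.setbit_neq by lia; rewrite tb_phi; bitcases).
    replace (Nat.clearbit (Nat.setbit (phi n k) (S a)) a) with (phi n (k-1)) by (unfold phi, x0; bits).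
    ring.
  - ring.
Qed.

Lemma H_phi k : (1 <= k <= n)%nat ->
  mapply N (H_XY lam om n) (ev (phi n k)) = fun i =>
  Cadd (Cmul (RtoC (-1)) (Cadd (if Nat.ltb k n then Cmul (RtoC 2) (ev (phi n (S k)) i) else C0)
                                 (if Nat.leb 2 k then Cmul (RtoC 2) (ev (phi n (k-1)) i) else C0)))
       (Cmul (Cadd (E0 lam om n) (RtoC (2 * V lam om k))) (ev (phi n k) i)).
Proof.
  intros Hk.
  rewrite H_XY_eq, mapply_madd, mapply_mscale, mapply_msumf, pot_ev by apply phi_lt.
  apply functional_extensionality; intros i. f_equal.
  - f_equal. rewrite (csum_ext _ _ (fun a => Cadd (if Nat.eqb a (k-1) then Cmul (RtoC 2) (ev (phi n (S k)) i) else C0)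
       (if Nat.eqb (S a) (k-1) then Cmul (RtoC 2) (ev (phi n (k-1)) i) else C0))).
    2:{ intros a Ha. rewrite hop_phi by lia. auto. }
    rewrite csum_add, csum_delta. f_equal.
    + destruct (Nat.ltb_spec (k-1) (n-1)); destruct (Nat.ltb_spec k n); try lia; auto.
    + destruct (Nat.leb_spec 2 k).
      * rewrite (csum_ext _ _ (fun a => if Nat.eqb a (k-2) then Cmul (RtoC 2) (ev (phi n (k-1)) i) else C0)).
        rewrite csum_delta_lt by lia. auto.
        intros a Ha. destruct (Nat.eqb_spec (S a) (k-1)); destruct (Nat.eqb_spec a (k-2)); try lia; auto.
      * rewrite (csum_ext _ _ (fun _ => C0)). apply csum_0.
        intros a Ha. destruct (Nat.eqb_spec (S a) (k-1)); try lia; auto.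
  - f_equal. unfold E0.
    rewrite (csum_ext _ _ (fun a => Cadd (RtoC (- V lam om (S a))) (if Nat.eqb a (k-1) then RtoC (2 * V lam om (S a)) else C0))).
    rewrite csum_add, csum_delta_lt by lia. replace (S (k-1)) with k by lia. auto.
    intros a Ha. rewrite tb_phi. replace (Nat.ltb a n) with true by (symmetry; apply Nat.ltb_lt; lia).
    rewrite Nat.eqb_sym. destruct (Nat.eqb a (k-1)); simpl; apply Cext; simpl; ring.
Qed.

End Ham2.

Section Fam.
Variables (lam om : R) (n : nat).
Local Notation N := (dimH n).

Definition vf (j : nat) : Vec := fun i => Cmul (sg (S j)) (ev (phi n (S j)) i).
Definition Bm : Mat := madd (mscale (E0 lam om n) mid) (mscale (RtoC 2) (Hn lam om n)).

Lemma sgS m : sg (S m) = Cmul (RtoC (-1)) (sg m).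
Proof. unfold sg. apply Cext; simpl; ring. Qed.

Lemma fam_rel j : (j < n)%nat -> veq N (mapply N (H_XY lam om n) (vf j)) (vcomb n Bm vf j).
Proof.
  intros Hj i _. unfold vf at 1. rewrite mapply_scal, H_phi by lia.
  unfold vcomb.
  rewrite (csum_ext _ _ (fun a => Cadd (Cadd
      (if Nat.eqb a j then Cmul (Cadd (E0 lam om n) (RtoC (2 * V lam om (S a)))) (vf a i) else C0)
      (if Nat.eqb a (S j) then Cmul (RtoC 2) (vf a i) else C0))
      (if Nat.eqb (S a) j then Cmul (RtoC 2) (vf a i) else C0))).
  2:{ intros a Ha. unfold Bm, madd, mscale, mid, Hn.
      destruct (Nat.eqb_spec a j); destruct (Nat.eqb_spec a (S j)); destruct (Nat.eqb_spec (S a) j);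
      destruct (Nat.eqb_spec j (S a)); try lia; simpl; apply Cext; simpl; ring. }
  rewrite !csum_add. rewrite csum_delta_lt by auto. rewrite csum_delta.
  destruct j as [|j'].
  - rewrite (csum_ext _ _ (fun _ => C0)) by (intros a _; destruct (Nat.eqb_spec (S a) 0); try lia; auto).
    rewrite csum_0. replace (S 0 - 1)%nat with 0%nat by lia. simpl (Nat.leb 2 1).
    unfold vf. destruct (Nat.ltb_spec 1 n); destruct (Nat.ltb_spec 1 n); try lia;
    rewrite ?sgS; apply Cext; simpl; ring.
  - rewrite (csum_ext _ _ (fun a => if Nat.eqb a j' then Cmul (RtoC 2) (vf a i) else C0))
      by (intros a _; destruct (Nat.eqb_spec (S a) (S j')); destruct (Nat.eqb_spec a j'); try lia; auto).
    rewrite csum_delta_lt by lia. replace (S (S j') - 1)%nat with (S j') by lia.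
    replace (Nat.leb 2 (S (S j'))) with true by (symmetry; apply Nat.leb_le; lia).
    unfold vf. destruct (Nat.ltb_spec (S (S j')) n); destruct (Nat.ltb_spec (S (S j')) n); try lia;
    rewrite ?sgS; apply Cext; simpl; ring.
Qed.

End Fam.

Section Main.
Variables (lam om : R) (n : nat).
Local Notation N := (dimH n).
Local Notation H := (H_XY lam om n).
Local Notation psi := (ev (x0 n)).

Lemma exp_x0 s : veq N (mapply N (mexp N (mscale s H)) psi) (fun i => Cmul (escal (Cmul s (E0 lam om n))) (psi i)).
Proof.
  pose proof (fam_exp N 1 H (fun _ _ => E0 lam om n) (fun _ => psi) s) as F.
  assert (Hf : forall k, (k < 1)%nat -> veq N (mapply N H ((fun _ => psi) k)) (vcomb 1 (fun _ _ => E0 lam om n) (fun _ => psi) k)).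
  { intros k _ i _. rewrite H_x0. unfold vcomb. simpl. ring. }
  specialize (F Hf 0%nat ltac:(lia)). intros i Hi. rewrite F by auto. unfold vcomb. simpl.
  replace (mscale s (fun _ _ : nat => E0 lam om n)) with (fun _ _ : nat => Cmul s (E0 lam om n)) by reflexivity.
  unfold escal. ring.
Qed.

Lemma mscale_Bm s : mscale s (Bm lam om n) =
  madd (mscale (Cmul s (E0 lam om n)) mid) (mscale (Cmul s (RtoC 2)) (Hn lam om n)).
Proof. apply functional_extensionality; intro a; apply functional_extensionality; intro b.
  unfold Bm, mscale, madd. ring. Qed.

Lemma sg_sq m : Cmul (sg m) (sg m) = C1.
Proof. unfold sg. apply Cext; simpl; try ring. rewrite <- Rpow_mult_distr.
  replace (-1 * -1) with 1 by ring. rewrite pow1. ring. Qed.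

Lemma Cmod_sg m : Cmod (sg m) = 1.
Proof. unfold sg. rewrite Cmod_RtoC, <- RPow_abs. replace (Rabs (-1)) with 1. apply pow1. rewrite Rabs_left by lra. ring. Qed.

End Main.

Theorem lemma4p1 (lam : R) (hlam : 0 < lam) (n : nat) (hn : (2 <= n)%nat)
  (om : R) (hom : 0 <= om < 1) (l r : nat) (hl : (1 <= l < n)%nat)
  (hr : (l < r <= n)%nat) (t : R) :
  opnorm (dimH n) (comm (dimH n) (tau lam om n t (c_op n l)) (a_star r))
  >= Cmod (mexp n (mscale (mkC 0 (-2 * t)) (Hn lam om n)) (l - 1)%nat (r - 1)%nat).
Proof.
  pose (sp := mkC 0 t). pose (sm := mkC 0 (-t)).
  pose (zp := escal (Cmul sp (E0 lam om n))).
  pose (zm := escal (Cmul sm (E0 lam om n))).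
  assert (HX : forall a b, (a < n)%nat -> (b < n)%nat ->
     mexp n (mscale sm (Bm lam om n)) a b = Cmul zm (mexp n (mscale (mkC 0 (-2 * t)) (Hn lam om n)) a b)).
  { intros a b Ha Hb. rewrite mscale_Bm. rewrite mexp_shift by auto. unfold zm.
    replace (Cmul sm (RtoC 2)) with (mkC 0 (-2 * t)) by (unfold sm; apply Cext; simpl; ring). auto. }
  assert (Hzz : Cmul zp zm = C1).
  { unfold zp, zm. replace (Cmul sm (E0 lam om n)) with (Copp (Cmul sp (E0 lam om n)))
      by (unfold sm, sp; apply Cext; simpl; ring). apply escal_inv. }
  assert (HTpsi : mapply (dimH n) (tau lam om n t (c_op n l)) (ev (x0 n)) = fun _ => C0).
  { unfold tau. rewrite !mapply_mmul.
    rewrite (mapply_ext (dimH n) (c_op n l) _ _ (exp_x0 lam om n (mkC 0 (-t)))). rewrite mapply_scal.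
    rewrite cop_x0 by lia. rewrite (mapply_ext (dimH n) _ _ (fun _ => C0)).
    apply mapply_zero. intros i _. ring. }
  assert (HApsi : mapply (dimH n) (a_star r) (ev (x0 n)) = fun i => Cmul (sg r) (vf n (r - 1) i)).
  { rewrite astar_x0 by lia. apply functional_extensionality; intros i.
    unfold vf. replace (S (r-1)) with r by lia.
    transitivity (Cmul (Cmul (sg r) (sg r)) (ev (phi n r) i)). rewrite sg_sq. ring. ring. }
  pose (w := Cmul (sg r) (Cmul (mexp n (mscale sm (Bm lam om n)) (l-1)%nat (r-1)%nat) (Cmul (sg l) (sg (l-1))))).
  assert (Hc : mapply (dimH n) (c_op n l) (mapply (dimH n) (mexp (dimH n) (mscale sm (H_XY lam om n)))
              (fun i => Cmul (sg r) (vf n (r - 1) i))) = fun i => Cmul w (ev (x0 n) i)).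
  { rewrite mapply_scal.
    rewrite (mapply_ext _ _ _ (fun i => Cmul (sg r) (vcomb n (mexp n (mscale sm (Bm lam om n))) (vf n) (r-1) i))).
    2:{ intros i Hi. rewrite (fam_exp (dimH n) n (H_XY lam om n) (Bm lam om n) (vf n) sm) by (auto using fam_rel; lia).
        auto. }
    rewrite mapply_scal. unfold vcomb. rewrite mapply_lin.
    apply functional_extensionality; intros i.
    rewrite (csum_ext _ _ (fun j => if Nat.eqb j (l-1) then
        Cmul (mexp n (mscale sm (Bm lam om n)) j (r-1)%nat) (Cmul (sg (S j)) (Cmul (sg (l-1)) (ev (x0 n) i))) else C0)).
    rewrite csum_delta_lt by lia. replace (S (l-1)) with l by lia. unfold w. ring.
    intros j Hj. unfold vf. rewrite mapply_scal, cop_phi by lia.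
    destruct (Nat.eqb_spec (S j) l); destruct (Nat.eqb_spec j (l-1)); try lia; ring. }
  assert (HC : veq (dimH n) (mapply (dimH n) (comm (dimH n) (tau lam om n t (c_op n l)) (a_star r)) (ev (x0 n)))
                 (fun i => Cmul (Cmul w zp) (ev (x0 n) i))).
  { unfold comm, msub. rewrite mapply_madd, mapply_mscale, !mapply_mmul.
    rewrite HTpsi, mapply_zero, HApsi. unfold tau. rewrite !mapply_mmul.
    replace (mkC 0 (-t)) with sm by reflexivity. rewrite Hc. rewrite mapply_scal.
    intros i Hi. rewrite (exp_x0 lam om n (mkC 0 t)) by auto. unfold zp, sp. ring. }
  apply Rle_ge.
  replace (Cmod (mexp n (mscale {| Cre := 0; Cim := -2 * t |} (Hn lam om n)) (l - 1)%nat (r - 1)%nat))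
    with (vnorm (dimH n) (fun i => Cmul (Cmul w zp) (ev (x0 n) i))).
  2:{ rewrite vnorm_ev by apply x0_lt. unfold w. rewrite HX by lia.
      rewrite !Cmod_mul, !Cmod_sg.
      assert (Hm : Cmod zp * Cmod zm = 1) by (rewrite <- Cmod_mul, Hzz; apply Cmod_C1).
      set (y := Cmod (mexp n (mscale {| Cre := 0; Cim := -2 * t |} (Hn lam om n)) (l - 1)%nat (r - 1)%nat)).
      transitivity ((Cmod zp * Cmod zm) * y). ring. rewrite Hm. ring. }
  rewrite <- (vnorm_ext _ _ _ HC). apply opnorm_ge.
  replace (ev (x0 n)) with (fun i => Cmul C1 (ev (x0 n) i)) by (apply functional_extensionality; intros; ring).
  rewrite vnorm_ev by apply x0_lt. rewrite Cmod_C1. lra.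
Qed.
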